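(* Fix $b\in\mathbb{Z}^{V_+}_{\ge0}$. For every $\bar x\in\mathcal{X}$, $$\mathrm{FLOW}(\bar x)=\Big\{y\in[\mathbf 0,b]^N:\ y^\xi(S)\ge\frac{d^\xi(S)}{C}+\bar x(E(S))-|S|\ \ \forall\emptyset\ne S\subseteq V_+,\ \forall\xi\in[N]\Big\}.$$
   Context: $G=(V,E)$ complete undirected graph with $V=\{0\}\cup V_+$ ($0$ depot, $V_+$ customers); $D=(V,A)$ replaces each edge by two opposite arcs; $\delta^-(v)$, $\delta^+(v)$ are the arcs entering/leaving $v$. Capacity $C>0$; scenarios $\xi\in[N]$ with demands $d^\xi\in\mathbb{Q}^{V_+}_{\ge0}$, $d^\xi(v)\le C$, probabilities $p_\xi\ge0$ summing to $1$; $\bar d=\sum_\xi p_\xi d^\xi$. $f(S)=\sum_{i\in S}f(i)$; $\delta(S)$: edges with exactly one end in $S$; $E(S)$: edges with both ends in $S$. $\mathcal{X}$ is one of $\mathcal{X}_{\mathrm{sub}}=\{x\in[0,2]^E: x(\delta(v))=2\ \forall v\in V_+,\ x(E(S))\le|S|-1\ \forall\emptyset\ne S\subseteq V_+\}$ or $\mathcal{X}_{\mathrm{cvrp}}=\mathcal{X}_{\mathrm{sub}}\cap\{x:x(\delta(0))=2k,\ x(E(S))\le|S|-\lceil\bar d(S)/C\rceil\}$. $[\mathbf 0,b]^N=\{y\in\mathbb{R}^{[N]\times V_+}:0\le y^\xi_v\le b_v\}$. For $\bar x\in\mathcal{X}$, $\mathrm{FLOW}(\bar x)$ is the set of $y\in[\mathbf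 0,b]^N$ for which there exist $f\in\mathbb{R}^{[N]\times A}_{\ge0}$, $g\in\mathbb{R}^{[N]\times V_+}_{\ge0}$ with $f^\xi(\delta^-(v))+d^\xi(v)=f^\xi(\delta^+(v))+g^\xi_v$ for all $v\in V_+,\xi$; $f^\xi_{(u,v)}\le\frac{C}{2}\bar x_{\{u,v\}}$ for all $(u,v)\in A,\xi$; $g^\xi_v\le Cy^\xi_v$ for all $v,\xi$. *)

(* Defs.v *)
From HB Require Import structures.
From mathcomp Require Import all_boot all_order all_algebra.
From mathcomp Require Import reals.
Set Implicit Arguments. Unset Strict Implicit. Unset Printing Implicit Defensive.
Import Order.TTheory GRing.Theory Num.Theory.
Local Open Scope ring_scope.

(* Vertices: V = {0} ∪ V_+ with V_+ = 'I_n (customers) and the depot 0 = None. *)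
Definition vert (n : nat) := option 'I_n.

Section Defs.
Variables (R : realType) (n N : nat).

(* An edge vector x ∈ R^E of the complete graph is represented by a symmetric
   function x : V -> V -> R (value x u v = x_{u,v} for u <> v; diagonal unused). *)

Definition xdelta (x : vert n -> vert n -> R) (v : vert n) : R :=
  \sum_(u : vert n | u != v) x u v.

Definition xE (x : vert n -> vert n -> R) (S : {set 'I_n}) : R :=
  \sum_(i in S) \sum_(j in S | (i < j)%N) x (Some i) (Some j).

Definition Xsub (x : vert n -> vert n -> R) : Prop :=
  [/\ (forall u v, x u v = x v u),
      (forall u v : vert n, u != v -> 0 <= x u v <= 2),
      (forall v : 'I_n, xdelta x (Some v) = 2) &
      (forall S : {set 'I_n}, S != set0 -> xE x S <= #|S|%:R - 1)].

Definition dbar (p : 'I_N -> R) (d : 'I_N -> 'I_n -> rat) (S : {set 'I_n}) : R :=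
  \sum_(xi < N) p xi * \sum_(i in S) ratr (d xi i).

Definition Xcvrp (k : nat) (p : 'I_N -> R) (d : 'I_N -> 'I_n -> rat) (C : R)
    (x : vert n -> vert n -> R) : Prop :=
  [/\ Xsub x,
      xdelta x None = 2 * k%:R &
      (forall S : {set 'I_n}, S != set0 ->
         xE x S <= #|S|%:R - (Num.ceil (dbar p d S / C))%:~R)].

Definition in_box (b : 'I_n -> nat) (y : 'I_N -> 'I_n -> R) : Prop :=
  forall xi i, 0 <= y xi i <= (b i)%:R.

Definition FLOW (C : R) (d : 'I_N -> 'I_n -> rat) (b : 'I_n -> nat)
    (x : vert n -> vert n -> R) (y : 'I_N -> 'I_n -> R) : Prop :=
  in_box b y /\
  exists (f : 'I_N -> vert n -> vert n -> R) (g : 'I_N -> 'I_n -> R),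
    [/\ (forall xi (u v : vert n), u != v -> 0 <= f xi u v),
        (forall xi i, 0 <= g xi i),
        (forall xi (i : 'I_n),
           \sum_(u : vert n | u != Some i) f xi u (Some i) + ratr (d xi i)
           = \sum_(w : vert n | w != Some i) f xi (Some i) w + g xi i),
        (forall xi (u v : vert n), u != v -> f xi u v <= C / 2 * x u v) &
        (forall xi i, g xi i <= C * y xi i)].

End Defs.

(* Main.v *)
Require Import Defs.
From mathcomp Require boolp.
From HB Require Import structures.
From mathcomp Require Import all_boot all_order all_algebra.
From mathcomp Require Import reals ring lra.
Set Implicit Arguments. Unset Strict Implicit. Unset Printing Implicit Defensive.
Import Order.TTheory GRing.Theory Num.Theory.
Local Open Scope ring_scope.

Section Abs.
Variables (R : realFieldType) (V : finType).

Lemma sum_option (T : finType) (F : option T -> R) :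
  \sum_(v : option T) F v = F None + \sum_(i : T) F (Some i).
Proof.
rewrite (bigD1 None) //=; congr (_ + _).
have -> : \sum_(v | v != None) F v = \sum_(v in [set Some x | x : T]) F v.
  apply: eq_bigl => v; case: v => [i|] /=.
    by apply/esym/imsetP; exists i.
  by apply/esym/imsetP => -[].
rewrite big_imset //; by move=> ? ? _ _ [].
Qed.

Definition ind (S : {set V}) v : R := if v \in S then 1 else 0.

Lemma sum_ind (S : {set V}) (F : V -> R) : \sum_(v in S) F v = \sum_v F v * ind S v.
Proof.
rewrite big_mkcond; apply: eq_bigr => v _; rewrite /ind; case: (v \in S); 
  by rewrite ?mulr1 ?mulr0.
Qed.

Lemma sum_indC (S : {set V}) (F : V -> R) : \sum_(v in ~: S) F v = \sum_v F v * (1 - ind S v).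
Proof.
rewrite big_mkcond; apply: eq_bigr => v _; rewrite /ind in_setC; case: (v \in S) => /=;
  by rewrite ?subrr ?subr0 ?mulr1 ?mulr0.
Qed.

Lemma sum_delta (a : V) (X : V -> R) : \sum_v (if v == a then X v else 0) = X a.
Proof. by rewrite -big_mkcond big_pred1_eq. Qed.

Definition Phi (d c : V -> R) (u : V -> V -> R) (al be : V -> R) (ga : V -> V -> R) :=
  \sum_v c v * al v + \sum_v d v * be v + \sum_v \sum_w u v w * ga v w.

Definition slackP (d c : V -> R) (u : V -> V -> R) (S : {set V}) : R :=
  \sum_(v in S) c v + \sum_(v in S) \sum_(w in ~: S) u v w - \sum_(v in S) d v.
Definition slackQ (d : V -> R) (u : V -> V -> R) (S : {set V}) : R :=
  \sum_(v in S) d v + \sum_(v in ~: S) \sum_(w in S) u v w.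

Lemma cut_ind (u : V -> V -> R) (S : {set V}) :
  \sum_(v in S) \sum_(w in ~: S) u v w = \sum_v \sum_w u v w * (ind S v * (1 - ind S w)).
Proof.
rewrite sum_ind; apply: eq_bigr => v _; rewrite sum_indC mulr_suml.
by apply: eq_bigr => w _; ring.
Qed.

Lemma cutC_ind (u : V -> V -> R) (S : {set V}) :
  \sum_(v in ~: S) \sum_(w in S) u v w = \sum_v \sum_w u v w * ((1 - ind S v) * ind S w).
Proof.
rewrite sum_indC; apply: eq_bigr => v _; rewrite sum_ind mulr_suml.
by apply: eq_bigr => w _; ring.
Qed.

Lemma slackP_Phi d c u S : slackP d c u S =
  Phi d c u (ind S) (fun v => - ind S v) (fun v w => ind S v * (1 - ind S w)).
Proof.
rewrite /slackP /Phi cut_ind (sum_ind S c) (sum_ind S d).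
have -> : \sum_v d v * - ind S v = - \sum_v d v * ind S v.
  by rewrite -sumrN; apply: eq_bigr => v _; rewrite mulrN.
by rewrite addrAC.
Qed.

Lemma slackQ_Phi d c u S : slackQ d u S =
  Phi d c u (fun _ => 0) (ind S) (fun v w => (1 - ind S v) * ind S w).
Proof.
rewrite /slackQ /Phi cutC_ind (sum_ind S d).
have -> : \sum_v c v * 0 = 0 :> R by rewrite big1 // => v _; rewrite mulr0.
by rewrite add0r.
Qed.


Lemma lin4 (F1 F2 F3 F4 : V -> R) :
  \sum_v F1 v + \sum_v F2 v - (\sum_v F3 v + \sum_v F4 v) =
  \sum_v (F1 v + F2 v - (F3 v + F4 v)).
Proof. by rewrite sumrB !big_split. Qed.

Lemma sum2_ge (F : V -> V -> R) a b : (forall v w, 0 <= F v w) ->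
  F a b <= \sum_v \sum_w F v w.
Proof.
move=> F0; rewrite (bigD1 a) //= (bigD1 b) //= -addrA lerDl.
apply: addr_ge0; first by apply: sumr_ge0 => ? _; apply: F0.
by apply: sumr_ge0 => v _; apply: sumr_ge0 => ? _; apply: F0.
Qed.

Lemma Phi_combine d c u (a b : V) al1 be1 ga1 al2 be2 ga2 al3 be3 ga3 al4 be4 ga4 :
  (forall v, 0 <= c v) -> (forall v w, 0 <= u v w) ->
  (forall v, al3 v + al4 v <= al1 v + al2 v) ->
  (forall v, be1 v + be2 v = be3 v + be4 v) ->
  (forall v w, ga3 v w + ga4 v w <= ga1 v w + ga2 v w) ->
  1 <= ga1 a b + ga2 a b - (ga3 a b + ga4 a b) ->
  Phi d c u al3 be3 ga3 + Phi d c u al4 be4 ga4 + u a b <=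
  Phi d c u al1 be1 ga1 + Phi d c u al2 be2 ga2.
Proof.
move=> c0 u0 Hal Hbe Hga Hab.
set C1 := \sum_v c v * al1 v; set C2 := \sum_v c v * al2 v.
set C3 := \sum_v c v * al3 v; set C4 := \sum_v c v * al4 v.
set D1 := \sum_v d v * be1 v; set D2 := \sum_v d v * be2 v.
set D3 := \sum_v d v * be3 v; set D4 := \sum_v d v * be4 v.
set G1 := \sum_v \sum_w u v w * ga1 v w; set G2 := \sum_v \sum_w u v w * ga2 v w.
set G3 := \sum_v \sum_w u v w * ga3 v w; set G4 := \sum_v \sum_w u v w * ga4 v w.
have HC : 0 <= C1 + C2 - (C3 + C4).
  rewrite /C1 /C2 /C3 /C4 lin4; apply: sumr_ge0 => v _.
  have -> : c v * al1 v + c v * al2 v - (c v * al3 v + c v * al4 v) =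
    c v * (al1 v + al2 v - (al3 v + al4 v)) by ring.
  by apply: mulr_ge0 => //; rewrite subr_ge0.
have HD : D1 + D2 - (D3 + D4) = 0.
  rewrite /D1 /D2 /D3 /D4 lin4; apply: big1 => v _.
  have -> : d v * be1 v + d v * be2 v - (d v * be3 v + d v * be4 v) =
    d v * (be1 v + be2 v - (be3 v + be4 v)) by ring.
  by rewrite Hbe subrr mulr0.
have HG : u a b <= G1 + G2 - (G3 + G4).
  rewrite /G1 /G2 /G3 /G4 lin4.
  rewrite (eq_bigr (fun v => \sum_w u v w * (ga1 v w + ga2 v w - (ga3 v w + ga4 v w)))); last first.
    move=> v _; rewrite lin4; apply: eq_bigr => w _; ring.
  have := @sum2_ge (fun v w => u v w * (ga1 v w + ga2 v w - (ga3 v w + ga4 v w))) a b.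
  move=> /(_ _) H; apply: le_trans (H _).
    by rewrite ler_peMr.
  by move=> v w; apply: mulr_ge0 => //; rewrite subr_ge0.
rewrite /Phi -/C1 -/C2 -/C3 -/C4 -/D1 -/D2 -/D3 -/D4 -/G1 -/G2 -/G3 -/G4.
lra.
Qed.

Lemma Phi_update d c u (a b : V) t al be ga :
  Phi (fun v => d v - (if v == a then t else 0) + (if v == b then t else 0)) c
      (fun v w => if (v == a) && (w == b) then 0 else u v w) al be ga =
  Phi d c u al be ga - t * be a + t * be b - u a b * ga a b.
Proof.
rewrite /Phi.
have -> : \sum_v (d v - (if v == a then t else 0) + (if v == b then t else 0)) * be v =
   \sum_v d v * be v - \sum_v (if v == a then t * be a else 0)
   + \sum_v (if v == b then t * be b else 0).
  rewrite -sumrB -big_split; apply: eq_bigr => v _ /=.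
  by case: eqP => [->|_]; case: eqP => [->|_]; ring.
have -> : \sum_v \sum_w (if (v == a) && (w == b) then 0 else u v w) * ga v w =
   \sum_v \sum_w u v w * ga v w -
   \sum_v (if v == a then \sum_w (if w == b then u a b * ga a b else 0) else 0).
  rewrite -sumrB; apply: eq_bigr => v _ /=.
  case: eqP => [->|_] /=; last by rewrite subr0.
  rewrite -sumrB; apply: eq_bigr => w _ /=.
  by case: eqP => [->|_]; ring.
rewrite !sum_delta.
ring.
Qed.

Ltac pw := rewrite /ind !inE;
  repeat match goal with
  | H : is_true (?x \in ?S) |- context [?x \in ?S] => rewrite H
  | H : is_true (~~ (?x \in ?S)) |- context [?x \in ?S] => rewrite (negbTE H) end;
  repeat match goal with |- context [?x \in ?S] => case: (x \in S) end; rewrite /=; lra.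

Section Sub.
Variables (d c : V -> R) (u : V -> V -> R) (a b : V).
Hypotheses (c0 : forall v, 0 <= c v) (u0 : forall v w, 0 <= u v w).
Hypotheses (HP : forall S, 0 <= slackP d c u S) (HQ : forall S, 0 <= slackQ d u S).

Ltac comb := apply: Phi_combine => //;
  first [move=> v w; pw | move=> v; pw | pw].

Lemma subP (A B : {set V}) : a \in A -> b \notin A -> b \in B -> a \notin B ->
  u a b <= slackP d c u A + slackP d c u B.
Proof.
move=> aA bA bB aB.
have := HP (A :|: B); have := HP (A :&: B).
have : slackP d c u (A :|: B) + slackP d c u (A :&: B) + u a b <=
       slackP d c u A + slackP d c u B.
  rewrite !slackP_Phi; comb.
lra.
Qed.

Lemma subQ (A B : {set V}) : a \in A -> b \notin A -> b \in B -> a \notin B ->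
  u a b <= slackQ d u A + slackQ d u B.
Proof.
move=> aA bA bB aB.
have := HQ (A :|: B); have := HQ (A :&: B).
have : slackQ d u (A :|: B) + slackQ d u (A :&: B) + u a b <=
       slackQ d u A + slackQ d u B.
  rewrite !(@slackQ_Phi d c); comb.
lra.
Qed.

Lemma subPQ (A A' : {set V}) : a \in A -> b \notin A -> a \in A' -> b \notin A' ->
  u a b <= slackP d c u A + slackQ d u A'.
Proof.
move=> aA bA aA' bA'.
have := HP (A :\: A'); have := HQ (A' :\: A).
have : slackP d c u (A :\: A') + slackQ d u (A' :\: A) + u a b <=
       slackP d c u A + slackQ d u A'.
  rewrite !slackP_Phi !(@slackQ_Phi d c); comb.
lra.
Qed.

Lemma subQP (B B' : {set V}) : b \in B -> a \notin B -> b \in B' -> a \notin B' ->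
  u a b <= slackQ d u B + slackP d c u B'.
Proof.
move=> bB aB bB' aB'.
have := HQ (B :\: B'); have := HP (B' :\: B).
have : slackQ d u (B :\: B') + slackP d c u (B' :\: B) + u a b <=
       slackQ d u B + slackP d c u B'.
  rewrite !slackP_Phi !(@slackQ_Phi d c); comb.
lra.
Qed.

End Sub.

Definition bmax (P : pred {set V}) (F : {set V} -> R) :=
  \big[Num.max/0]_(S | P S) F S.

Lemma bmax_le (P : pred {set V}) (F : {set V} -> R) (M : R) : 0 <= M -> (forall S, P S -> F S <= M) -> bmax P F <= M.
Proof.
move=> M0 H; rewrite /bmax; elim/big_ind: _ => //.
  by move=> x y hx hy; rewrite ge_max hx hy.
Qed.

Lemma le_bmax (P : pred {set V}) (F : {set V} -> R) S : P S -> F S <= bmax P F.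
Proof. by move=> PS; rewrite /bmax (bigD1 S) //= le_max lexx. Qed.

Lemma bmax_ge0 (P : pred {set V}) (F : {set V} -> R) : 0 <= bmax P F.
Proof.
rewrite /bmax; elim/big_rec: _ => // i x _ hx.
by rewrite le_max hx orbT.
Qed.

Lemma slack_set1 (d c : V -> R) (u : V -> V -> R) v : (forall x w, x != w -> u x w = 0) ->
  slackP d c u [set v] = c v - d v /\ slackQ d u [set v] = d v.
Proof.
move=> u0; rewrite /slackP /slackQ !big_set1; split.
  rewrite big1 ?addr0 // => w; rewrite !inE => wv; apply: u0; by rewrite eq_sym.
rewrite big1 ?addr0 // => x; rewrite !inE => xv; rewrite big_set1; exact: u0.
Qed.

Lemma feasible (s : seq (V * V)) : forall (d c : V -> R) (u : V -> V -> R),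
  (forall v, 0 <= c v) -> (forall v w, 0 <= u v w) ->
  (forall v w, v != w -> u v w != 0 -> (v, w) \in s) ->
  (forall S, 0 <= slackP d c u S) -> (forall S, 0 <= slackQ d u S) ->
  exists f h, [/\ (forall v w, 0 <= f v w <= u v w),
    (forall v, 0 <= h v <= c v) &
    (forall v, \sum_w f w v + d v = \sum_w f v w + h v)].
Proof.
elim: s => [|[a b] s IH] d c u c0 u0 supp HP HQ.
  have uz : forall x w, x != w -> u x w = 0.
    by move=> x w xw; apply/eqP; apply/negP => /negP H; have := supp _ _ xw H.
  exists (fun _ _ => 0), d; split.
  - by move=> v w; rewrite lexx u0.
  - move=> v; have [e1 e2] := slack_set1 d c v uz.
    have := HP [set v]; have := HQ [set v]; rewrite e1 e2 => h1 h2.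
    apply/andP; split => //; lra.
  - by move=> v; rewrite !big1 // add0r addr0.
case: (eqVneq a b) => [eab|nab].
  apply: IH => // v w vw uvw; have := supp v w vw uvw; rewrite in_cons.
  case/orP => // /eqP [ea eb]; move: vw; by rewrite ea eb eab eqxx.
pose k := u a b.
pose PA := fun S : {set V} => (a \in S) && (b \notin S).
pose PB := fun S : {set V} => (b \in S) && (a \notin S).
pose t := Num.max (bmax PA (fun S => k - slackP d c u S)) (bmax PB (fun S => k - slackQ d u S)).
have t0 : 0 <= t by rewrite le_max bmax_ge0.
have tA : forall S, PA S -> k - slackP d c u S <= t.
  by move=> S PS; rewrite le_max le_bmax.
have tB : forall S, PB S -> k - slackQ d u S <= t.
  by move=> S PS; rewrite le_max [X in _ || X]le_bmax ?orbT.
have tk : t <= k.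
  rewrite ge_max; apply/andP; split; apply: bmax_le; try exact: u0; move=> S _.
    by have := HP S; lra.
  by have := HQ S; lra.
have tA' : forall S, PA S -> t <= slackQ d u S.
  move=> S /andP [aS bS]; rewrite ge_max; apply/andP; split; apply: bmax_le => // S' /andP [h1 h2].
    by have := subPQ c0 u0 HP HQ h1 h2 aS bS; rewrite -/k; lra.
  by have := subQ c0 u0 HQ aS bS h1 h2; rewrite -/k; lra.
have tB' : forall S, PB S -> t <= slackP d c u S.
  move=> S /andP [bS aS]; rewrite ge_max; apply/andP; split; apply: bmax_le => // S' /andP [h1 h2].
    by have := subP c0 u0 HP h1 h2 bS aS; rewrite -/k; lra.
  by have := subQP c0 u0 HP HQ h1 h2 bS aS; rewrite -/k; lra.
pose d' := fun v => d v - (if v == a then t else 0) + (if v == b then t else 0).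
pose u' := fun v w => if (v == a) && (w == b) then 0 else u v w.
have [f' [h [Hf Hh Hc]]] : exists f h, [/\ (forall v w, 0 <= f v w <= u' v w),
    (forall v, 0 <= h v <= c v) &
    (forall v, \sum_w f w v + d' v = \sum_w f v w + h v)].
  apply: IH => //.
  - by move=> v w; rewrite /u'; case: ifP.
  - move=> v w vw; rewrite /u'; case: ifP => hvw; first by rewrite eqxx. move=> uvw.
    have := supp v w vw uvw; rewrite in_cons; case/orP => //.
    by rewrite xpair_eqE hvw.
  - move=> S; rewrite slackP_Phi /d' /u' Phi_update -slackP_Phi.
    have := HP S; have := tA S; have := tB' S; rewrite /PA /PB /ind.
    by case: (a \in S); case: (b \in S) => /=; rewrite -/k; lra.
  - move=> S; rewrite (@slackQ_Phi _ c) /d' /u' Phi_update -slackQ_Phi.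
    have := HQ S; have := tA' S; have := tB S; rewrite /PA /PB /ind.
    by case: (a \in S); case: (b \in S) => /=; rewrite -/k; lra.
exists (fun v w => f' v w + (if (v == a) && (w == b) then t else 0)), h; split => //.
- move=> v w; have := Hf v w; rewrite /u'.
  case: ifP => [/andP [/eqP -> /eqP ->]|_] /=; last by rewrite addr0.
  by rewrite -/k; lra.
- move=> v; rewrite !big_split /=.
  have -> : \sum_w (if (w == a) && (v == b) then t else 0) = if v == b then t else 0.
    case: (v == b); last by rewrite big1 // => w _; rewrite andbF.
    by rewrite (eq_bigr (fun w => if w == a then t else 0)) ?sum_delta // => w _; rewrite andbT.
  have -> : \sum_w (if (v == a) && (w == b) then t else 0) = if v == a then t else 0.
    case: (v == a); last by rewrite big1.
    by rewrite (eq_bigr (fun w => if w == b then t else 0)) ?sum_delta.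
  have := Hc v; rewrite /d'; lra.
Qed.


End Abs.

Section Main.
Variables (R : realType) (n : nat) (x : vert n -> vert n -> R).
Hypothesis xsym : forall u v, x u v = x v u.
Hypothesis xdeg : forall v : 'I_n, xdelta x (Some v) = 2.

Lemma Some_inj_in (S : {set 'I_n}) : {in S &, injective (@Some 'I_n)}.
Proof. by move=> ? ? _ _ []. Qed.

Lemma sum_Some (S : {set 'I_n}) (F : vert n -> R) :
  \sum_(v in [set Some i | i in S]) F v = \sum_(i in S) F (Some i).
Proof. by rewrite big_imset //; apply: Some_inj_in. Qed.

Lemma mem_Some (S : {set 'I_n}) i : (Some i \in [set Some j | j in S]) = (i \in S).
Proof.
apply/imsetP/idP => [[j jS [->]] //|iS]; by exists i.
Qed.

Lemma None_Some (S : {set 'I_n}) : (None \in [set Some j | j in S]) = false.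
Proof. by apply/imsetP => -[]. Qed.

Lemma split_set (V : finType) (A : {set V}) (F : V -> R) :
  \sum_w F w = \sum_(w in A) F w + \sum_(w in ~: A) F w.
Proof.
rewrite (bigID (mem A)) /=; congr (_ + _); apply: eq_bigl => w; by rewrite in_setC.
Qed.

Lemma flow_cut (V : finType) (f : V -> V -> R) (S : {set V}) :
  \sum_(v in S) (\sum_w f v w - \sum_w f w v) =
  \sum_(v in S) \sum_(w in ~: S) f v w - \sum_(v in S) \sum_(w in ~: S) f w v.
Proof.
rewrite sumrB.
rewrite (eq_bigr (fun v => \sum_(w in S) f v w + \sum_(w in ~: S) f v w)); last first.
  by move=> v _; rewrite (split_set S).
rewrite [X in _ - X](eq_bigr (fun v => \sum_(w in S) f w v + \sum_(w in ~: S) f w v)); last first.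
  by move=> v _; rewrite (split_set S).
rewrite !big_split /= [X in _ - (X + _)](exchange_big _ _ _ (mem S) (mem S)) /=.
by rewrite opprD addrACA subrr add0r.
Qed.

Lemma xE_alt (S : {set 'I_n}) :
  xE x S = \sum_(i in S) \sum_(j in S) (if (i < j)%N then x (Some i) (Some j) else 0).
Proof. by rewrite /xE; apply: eq_bigr => i _; rewrite big_mkcondr. Qed.

Lemma cut_x (S : {set 'I_n}) :
  \sum_(v in [set Some i | i in S]) \sum_(w in ~: [set Some i | i in S]) x v w
  = 2 * #|S|%:R - 2 * xE x S.
Proof.
set S' := [set Some i | i in S].
have h1 : \sum_(v in S') xdelta x v = 2 * #|S|%:R.
  rewrite sum_Some (eq_bigr (fun _ => 2)); last by move=> i _; rewrite xdeg.
  by rewrite sumr_const mulr_natr.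
have h2 : forall v, v \in S' -> xdelta x v =
   \sum_(w in ~: S') x v w + \sum_(u in S') (if u != v then x u v else 0).
  move=> v vS; rewrite /xdelta (bigID (mem S')) /= addrC; congr (_ + _).
    rewrite (eq_bigr (fun w => x v w)); last by move=> w _; rewrite xsym.
    apply: eq_bigl => w; rewrite in_setC /=.
    by case: (eqVneq w v) => [->|]; rewrite ?vS ?andbT.
  rewrite -big_mkcondr; apply: eq_bigl => w; by rewrite andbC.
have h3 : \sum_(v in S') \sum_(u in S') (if u != v then x u v else 0) = 2 * xE x S.
  rewrite sum_Some (eq_bigr (fun i : 'I_n => \sum_(j in S)
     ((if (i < j)%N then x (Some i) (Some j) else 0) +
      (if (j < i)%N then x (Some j) (Some i) else 0)))); last first.
    move=> i _; rewrite sum_Some; apply: eq_bigr => j _.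
    have -> : (Some j != Some i) = (j != i) by [].
    case: (ltngtP i j) => h.
    - rewrite (_ : (j != i) = true); last by apply/eqP => e; move: h; rewrite e ltnn.
      by rewrite addr0 xsym.
    - rewrite (_ : (j != i) = true); last by apply/eqP => e; move: h; rewrite e ltnn.
      by rewrite add0r.
    - have -> : j = i by apply: val_inj.
      by rewrite eqxx addr0.
  rewrite (eq_bigr (fun i : 'I_n => \sum_(j in S) (if (i < j)%N then x (Some i) (Some j) else 0) +
      \sum_(j in S) (if (j < i)%N then x (Some j) (Some i) else 0))); last by move=> i _; rewrite big_split.
  rewrite big_split /= (exchange_big _ _ _ (mem S) (mem S) (fun i j => if (j < i)%N then _ else _)) /=.
  rewrite -xE_alt; ring.
rewrite (eq_bigr _ h2) big_split /= h3 in h1.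
rewrite -h1; ring.
Qed.

Lemma sum_sub_le (V : finType) (A : {set V}) (F : V -> R) :
  (forall v, 0 <= F v) -> \sum_(v in A) F v <= \sum_v F v.
Proof.
move=> F0; rewrite big_mkcond; apply: ler_sum => v _; case: (v \in A) => //.
Qed.

End Main.

Unset Implicit Arguments.

Theorem proposition2 (R : realType) (n N k : nat) (C : R)
    (p : 'I_N -> R) (d : 'I_N -> 'I_n -> rat) (b : 'I_n -> nat)
    (x : vert n -> vert n -> R) :
  0 < C ->
  (forall xi i, 0 <= d xi i /\ ratr (d xi i) <= C) ->
  (forall xi, 0 <= p xi) -> \sum_(xi < N) p xi = 1 ->
  (Xsub x \/ Xcvrp k p d C x) ->
  forall y : 'I_N -> 'I_n -> R,
    FLOW C d b x y <->
    (in_box b y /\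
     forall S : {set 'I_n}, S != set0 -> forall xi : 'I_N,
       (\sum_(i in S) ratr (d xi i)) / C + xE x S - #|S|%:R
         <= \sum_(i in S) y xi i).
Proof.
move=> C0 hd hp hs hX y.
have [xsym xnn xdeg _] : Xsub x by case: hX => [//|[]].
have dpos : forall xi i, 0 <= ratr (d xi i) :> R.
  by move=> xi i; rewrite ler0q; case: (hd xi i).
split.
- case=> hbox [f [g [f0 g0 hc hf hg]]]; split => // S S0 xi.
  set S' := [set Some i | i in S].
  have hcf : forall i, \sum_w f xi w (Some i) + ratr (d xi i) =
                       \sum_w f xi (Some i) w + g xi i.
    move=> i.
    have e1 : \sum_w f xi w (Some i) = f xi (Some i) (Some i) +
        \sum_(w : vert n | w != Some i) f xi w (Some i) by rewrite (bigD1 (Some i)).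
    have e2 : \sum_w f xi (Some i) w = f xi (Some i) (Some i) +
        \sum_(w : vert n | w != Some i) f xi (Some i) w by rewrite (bigD1 (Some i)).
    by rewrite e1 e2 -!addrA (hc xi i).
  have hcf2 : forall i, \sum_w f xi (Some i) w - \sum_w f xi w (Some i) =
                       ratr (d xi i) - g xi i.
    by move=> i; have := hcf i; lra.
  have key := flow_cut (f xi) S'.
  rewrite sum_Some (eq_bigr (fun i => ratr (d xi i) - g xi i)) in key; last first.
    by move=> i _; rewrite hcf2.
  rewrite sumrB in key.
  have H1 : \sum_(v in S') \sum_(w in ~: S') f xi v w <=
            C / 2 * \sum_(v in S') \sum_(w in ~: S') x v w.
    rewrite mulr_sumr; apply: ler_sum => v vS; rewrite mulr_sumr; apply: ler_sum => w wS.
    apply: hf; apply/eqP => e; move: wS; by rewrite in_setC -e vS.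
  have H2 : 0 <= \sum_(v in S') \sum_(w in ~: S') f xi w v.
    apply: sumr_ge0 => v vS; apply: sumr_ge0 => w wS; apply: f0.
    apply/eqP => e; move: wS; by rewrite in_setC e vS.
  have H3 : \sum_(i in S) g xi i <= C * \sum_(i in S) y xi i.
    rewrite mulr_sumr; apply: ler_sum => i _; exact: hg.
  rewrite (@cut_x R n x xsym xdeg S) in H1.
  have H4 : \sum_(i in S) ratr (d xi i) <=
            (\sum_(i in S) y xi i + #|S|%:R - xE x S) * C.
    have E : C / 2 * (2 * #|S|%:R - 2 * xE x S) = C * #|S|%:R - C * xE x S :> R.
      by field.
    rewrite E in H1; lra.
  rewrite -ler_pdivrMr // in H4; lra.
- case=> hbox hcut; split => //.
  have ex : forall xi, exists fh : (vert n -> vert n -> R) * (vert n -> R),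
     [/\ (forall u v, u != v -> 0 <= fh.1 u v), (forall i, 0 <= fh.2 (Some i)),
         (forall i, \sum_(u : vert n | u != Some i) fh.1 u (Some i) + ratr (d xi i)
            = \sum_(w : vert n | w != Some i) fh.1 (Some i) w + fh.2 (Some i)),
         (forall u v, u != v -> fh.1 u v <= C / 2 * x u v) &
         (forall i, fh.2 (Some i) <= C * y xi i)].
    move=> xi.
    pose dd := fun v : vert n => if v is Some i then ratr (d xi i) else 0 : R.
    pose uu := fun v w : vert n => if v == w then 0 else C / 2 * x v w.
    pose cc := fun v : vert n => if v is Some i then C * y xi i
                                 else \sum_(v' : vert n) \sum_(w : vert n) uu v' w.
    have C2 : 0 <= C / 2 by apply: divr_ge0; [exact: ltW|].
    have uu0 : forall v w, 0 <= uu v w.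
      move=> v w; rewrite /uu; case: eqP => // /eqP vw.
      by apply: mulr_ge0 => //; case/andP: (xnn _ _ vw).
    have cc0 : forall v, 0 <= cc v.
      case=> [i|] /=.
        by apply: mulr_ge0; [exact: ltW| case/andP: (hbox xi i)].
      by apply: sumr_ge0 => v _; apply: sumr_ge0 => w _; exact: uu0.
    have PS0 : forall S : {set vert n}, None \notin S -> 0 <= slackP dd cc uu S.
      move=> S nS; set T := [set i | Some i \in S].
      have ST : S = [set Some i | i in T].
        apply/setP => v; case: v => [i|]; rewrite ?mem_Some ?None_Some ?inE //.
        exact: negbTE.
      have Ecut : \sum_(v in S) \sum_(w in ~: S) uu v w =
                  C / 2 * (2 * #|T|%:R - 2 * xE x T).
        rewrite -(@cut_x R n x xsym xdeg T) -ST mulr_sumr; apply: eq_bigr => v vS.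
        rewrite mulr_sumr; apply: eq_bigr => w wS; rewrite /uu.
        case: eqP => // e; move: wS; by rewrite in_setC -e vS.
      rewrite /slackP Ecut ST !sum_Some /=.
      have Ey : \sum_(i in T) C * y xi i = C * \sum_(i in T) y xi i by rewrite mulr_sumr.
      rewrite Ey.
      case: (eqVneq T set0) => [T0|T0].
        by rewrite T0 /xE !big_set0 cards0; lra.
      have := hcut T T0 xi.
      set D := \sum_(i in T) _; set Y := \sum_(i in T) _; set K := #|T|%:R.
      move=> h.
      have h' : D / C <= Y + K - xE x T by lra.
      rewrite ler_pdivrMr // in h'.
      have E : C / 2 * (2 * K - 2 * xE x T) = C * K - C * xE x T by field.
      rewrite E; lra.
    have PS : forall S : {set vert n}, 0 <= slackP dd cc uu S.
      move=> S; case: (boolP (None \in S)) => nS; last exact: PS0.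
      have := PS0 (S :\ None); rewrite !inE eqxx /= => /(_ isT) hS0.
      rewrite /slackP (big_setD1 (F := cc) None nS) (big_setD1 (F := dd) None nS) /=.
      have h1 : 0 <= \sum_(v in S) \sum_(w in ~: S) uu v w.
        by apply: sumr_ge0 => v _; apply: sumr_ge0 => w _; exact: uu0.
      have h2 : \sum_(v in S :\ None) \sum_(w in ~: (S :\ None)) uu v w <= cc None.
        have h3 : \sum_(v in S :\ None) \sum_(w in ~: (S :\ None)) uu v w <=
                  \sum_(v in S :\ None) \sum_w uu v w.
          by apply: ler_sum => v _; apply: sum_sub_le => w; exact: uu0.
        have h4 : \sum_(v in S :\ None) \sum_w uu v w <= \sum_v \sum_w uu v w.
          by apply: sum_sub_le => v; apply: sumr_ge0 => w _; exact: uu0.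
        exact: le_trans h3 h4.
      rewrite /slackP in hS0; move: h2; rewrite /cc => h2; lra.
    have QS : forall S : {set vert n}, 0 <= slackQ dd uu S.
      move=> S; apply: addr_ge0.
        by apply: sumr_ge0; case=> [i|] _ /=.
      by apply: sumr_ge0 => v _; apply: sumr_ge0 => w _; exact: uu0.
    have supp : forall v w, v != w -> uu v w != 0 ->
        (v, w) \in enum [set: vert n * vert n].
      by move=> v w _ _; rewrite mem_enum in_setT.
    have [f [h [Hf Hh Hc]]] := feasible cc0 uu0 supp PS QS.
    exists (f, h); split => /=.
    - by move=> u v _; case/andP: (Hf u v).
    - by move=> i; case/andP: (Hh (Some i)).
    - move=> i; have := Hc (Some i).
      have e1 : \sum_w f w (Some i) = f (Some i) (Some i) +
        \sum_(w : vert n | w != Some i) f w (Some i) by rewrite (bigD1 (Some i)).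
      have e2 : \sum_w f (Some i) w = f (Some i) (Some i) +
        \sum_(w : vert n | w != Some i) f (Some i) w by rewrite (bigD1 (Some i)).
      by rewrite e1 e2 /= -!addrA => /addrI.
    - move=> u v uv; case/andP: (Hf u v) => _; by rewrite /uu (negbTE uv).
    - by move=> i; case/andP: (Hh (Some i)).
  have [F HF] := boolp.choice ex.
  exists (fun xi => (F xi).1), (fun xi i => (F xi).2 (Some i)).
  split => xi; by case: (HF xi).
Qed.
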